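(* Let $\mathfrak{A}$ be a $\sigma$-algebra represented as $\mathfrak{A}=\mathfrak{A}(M)/\mathcal{I}$, with $\mathfrak{A}(M)$ a $\sigma$-algebra of subsets of a nonempty set $M$ and $\mathcal{I}$ a $\sigma$-ideal in $\mathfrak{A}(M)$. Up to the canonical homeomorphism between $\mathcal{Q}(\mathfrak{A})$ and the Gelfand spectrum of the abelian $C^\ast$-algebra $\mathcal{F}_{\mathfrak{A}(M)}(M,\mathbb{C})/\mathcal{F}(\mathcal{I})$, the Gelfand transformation of $\mathcal{F}_{\mathfrak{A}(M)}(M,\mathbb{C})/\mathcal{F}(\mathcal{I})$ restricted to its selfadjoint part $\mathcal{F}_{\mathfrak{A}(M)}(M,\mathbb{R})/\mathcal{F}_{\mathbb{R}}(\mathcal{I})$ is the map \[ \Gamma:\mathcal{F}_{\mathfrak{A}(M)}(M,\mathbb{R})/\mathcal{F}_{\mathbb{R}}(\mathcal{I})\to C(\mathcal{Q}(\mathfrak{A}),\mathbb{R}),\qquad [\varphi]\mapsto f_{E^{[\varphi]}}. \] Moreover, if $\mathcal{Q}(\mathfrak{A})$ is identified with $\mathcal{Q}^{\mathcal{I}}(\mathfrak{A}(M))$, then $f_{E^{[\varphi]}}=f_{E^\varphi}|_{\mathcal{Q}^{\mathcal{I}}(\mathfrak{A}(M))}$, where $\varphi\mapsto f_{E^\varphi}$ is the Gelfand transformation on $\mathcal{F}_{\mathfrak{A}(M)}(M,\mathbb{R})$ (via $\mathcal{Q}(\mathfrak{A}(M))\cong\Omega(\mathcal{F}_{\mathfr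ak{A}(M)}(M,\mathbb{C}))$).
   Context: $\mathcal{F}_{\mathfrak{A}(M)}(M,\mathbb{C})$ is the $C^\ast$-algebra of bounded $\mathfrak{A}(M)$-measurable functions $M\to\mathbb{C}$ (sup norm), $\mathcal{F}_{\mathfrak{A}(M)}(M,\mathbb{R})$ its real-valued elements, $\mathcal{F}(\mathcal{I})$ the closed ideal of those functions vanishing outside some $A\in\mathcal{I}$, and $\mathcal{F}_{\mathbb{R}}(\mathcal{I})=\mathcal{F}_{\mathfrak{A}(M)}(M,\mathbb{R})\cap\mathcal{F}(\mathcal{I})$. For a $\sigma$-complete lattice $\mathbb{L}$ (with $0,1$), a spectral family is a map $E:\mathbb{R}\to\mathbb{L}$ with $E_\lambda\le E_\mu$ ($\lambda\le\mu$), $E_\lambda=\bigwedge_{\mu>\lambda}E_\mu$, $\bigwedge_\lambda E_\lambda=0$, $\bigvee_\lambda E_\lambda=1$; quasipoints are maximal dual ideals (maximal nonempty upward closed subsets not containing $0$ and closed under finite meets); the Stone spectrum $\mathcal{Q}(\mathbb{L})$ is the set of quasipoints with the topology generated by $\{\mathfrak{B}\mid a\in\mathfrak{B}\}$, $a\in\mathbb{L}$; for a bounded spectral family $E$, $f_E(\mathfrak{B}):=\inf\{\lambda\mid E_\lambda\in\mathfrak{B}\}$. For $\varphi\in\mathcal{F}_{\mathfrak{A}(M)}(M,\mathbb{R})$, $E^\varphi_\lambda:=\varphi^{-1}(]-\infty,\lambda])$ and $E^{[\varphi]}_\lambda:=[E^\varphi_\lambda]\in\mathfrak{A}$ (class modulo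 $\mathcal{I}$); $E^{[\varphi]}$ depends only on $[\varphi]$ and is a spectral family in $\mathfrak{A}$. With $\mathcal{I}^\perp=\{M\setminus A\mid A\in\mathcal{I}\}$, $\mathcal{Q}^{\mathcal{I}}(\mathfrak{A}(M)):=\{\mathfrak{B}\in\mathcal{Q}(\mathfrak{A}(M))\mid\mathcal{I}^\perp\subseteq\mathfrak{B}\}$, identified with $\mathcal{Q}(\mathfrak{A})$ via $\mathfrak{B}\mapsto\{[A]\mid A\in\mathfrak{B}\}$ (so that $[A]$ lies in the image iff any representative $A$ lies in $\mathfrak{B}$). It is known that $\mathcal{Q}(\mathfrak{A})$ is canonically homeomorphic to the Gelfand spectrum of $\mathcal{F}_{\mathfrak{A}(M)}(M,\mathbb{C})/\mathcal{F}(\mathcal{I})$. *)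

(* Defs.v *)
From HB Require Import structures.
From mathcomp Require Import all_boot all_order all_algebra.
From mathcomp Require Import all_classical all_reals all_analysis.
From mathcomp Require Import complex.

Set Implicit Arguments.
Unset Strict Implicit.
Unset Printing Implicit Defensive.

Import Order.TTheory GRing.Theory Num.Theory.
Import numFieldNormedType.Exports.
Local Open Scope classical_set_scope.
Local Open Scope ring_scope.

(* Generic lattice notions: a lattice is given by its carrier Lc (a set
   inside an ambient type L), its order le and its bottom element bot.  *)
Section LatticeNotions.
Variables (L : Type) (Lc : set L) (le : L -> L -> Prop) (bot : L).

Definition is_meet (a b c : L) : Prop :=
  [/\ Lc c, le c a, le c b & forall e, Lc e -> le e a -> le e b -> le e c].

Definition dual_ideal (B : set L) : Prop :=
  [/\ B `<=` Lc, B !=set0,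
      (forall a b, B a -> Lc b -> le a b -> B b),
      ~ B bot &
      (forall a b c, B a -> B b -> is_meet a b c -> B c)].

Definition quasipoint (B : set L) : Prop :=
  dual_ideal B /\ (forall B', dual_ideal B' -> B `<=` B' -> B' = B).

(* Stone topology on the set of quasipoints: generated by the sets
   {B | a \in B}, a in L.  U is open iff every point of U has a finite
   intersection of generating sets around it contained in U. *)
Definition stone_open (U : set (set L)) : Prop :=
  U `<=` quasipoint /\
  forall B, U B -> exists (n : nat) (a : nat -> L),
    (forall i, (i < n)%N -> B (a i)) /\
    (forall B', quasipoint B' -> (forall i, (i < n)%N -> B' (a i)) -> U B').

Definition stone_continuous {R : realType} (f : set L -> R) : Prop :=
  forall V : set R, open V -> stone_open [set B | quasipoint B /\ V (f B)].

Definition fE {R : realType} (E : R -> L) (B : set L) : R :=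
  inf [set l : R | B (E l)].

End LatticeNotions.

Section Setting.
Context (R : realType) (d : measure_display) (M : measurableType d).

Definition sigma_ideal (I : set (set M)) : Prop :=
  [/\ I `<=` measurable, I set0,
      (forall A B, I B -> measurable A -> A `<=` B -> I A) &
      (forall F : nat -> set M, (forall n, I (F n)) -> I (\bigcup_n F n))].

Definition bmeasR (phi : M -> R) : Prop :=
  measurable_fun setT phi /\ exists k : R, forall x, `|phi x| <= k.

Definition bmeasC (f : M -> R[i]) : Prop :=
  bmeasR (fun x => complex.Re (f x)) /\ bmeasR (fun x => complex.Im (f x)).

Definition FI (I : set (set M)) (f : M -> R[i]) : Prop :=
  bmeasC f /\ exists A, I A /\ forall x, ~ A x -> f x = 0.

(* a character (element of the Gelfand spectrum) of the quotient
   C*-algebra F(M,C)/F(I), represented (as usual) by a nonzero multiplicative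
   linear functional on F(M,C) that vanishes on F(I).  tau is only
   meaningful on bounded measurable functions. *)
Definition quotient_character (I : set (set M)) (tau : (M -> R[i]) -> R[i])
  : Prop :=
  [/\ (forall f g, bmeasC f -> bmeasC g -> tau (f \+ g) = tau f + tau g),
      (forall (c : R[i]) f, bmeasC f -> tau (fun x => c * f x) = c * tau f),
      (forall f g, bmeasC f -> bmeasC g -> tau (f \* g) = tau f * tau g),
      (exists f, bmeasC f /\ tau f != 0) &
      (forall f, FI I f -> tau f = 0)].

Definition cplx (phi : M -> R) : M -> R[i] := fun x => (phi x)%:C%C.

Definition cls (I : set (set M)) (A : set M) : set (set M) :=
  [set B | measurable B /\ I ((A `\` B) `|` (B `\` A))].

Definition Qcar (I : set (set M)) : set (set (set M)) :=
  [set c | exists A, measurable A /\ c = cls I A].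

Definition Qle (I : set (set M)) (c1 c2 : set (set M)) : Prop :=
  exists A B, [/\ measurable A, measurable B, c1 = cls I A, c2 = cls I B &
                 I (A `\` B)].

Definition Qbot (I : set (set M)) : set (set M) := cls I set0.

Definition QM (B : set (set M)) : Prop :=
  quasipoint measurable (fun A B => A `<=` B) set0 B.

Definition QA (I : set (set M)) (B : set (set (set M))) : Prop :=
  quasipoint (Qcar I) (Qle I) (Qbot I) B.

Definition QIM (I : set (set M)) (B : set (set M)) : Prop :=
  QM B /\ forall A, I A -> B (~` A).

Definition ident (I : set (set M)) (B : set (set M)) : set (set (set M)) :=
  [set c | exists A, B A /\ c = cls I A].

Definition Ephi (phi : M -> R) (l : R) : set M := [set x | phi x <= l].
Definition Eclass (I : set (set M)) (phi : M -> R) (l : R) : set (set M) :=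
  cls I (Ephi phi l).

(* the canonical map from the Gelfand spectrum of F(M,C)/F(I) to Q(A):
   tau |-> {[A] | tau(chi_A) = 1} *)
Definition kappa (I : set (set M)) (tau : (M -> R[i]) -> R[i])
  : set (set (set M)) :=
  [set c | exists A, [/\ measurable A, c = cls I A & tau \1_A = 1]].

(* the same for F(M,C) itself (I = {empty}): tau |-> {A | tau(chi_A) = 1} *)
Definition kappa0 (tau : (M -> R[i]) -> R[i]) : set (set M) :=
  [set A | measurable A /\ tau \1_A = 1].

End Setting.

(* Main.v *)
Require Import Defs.
From HB Require Import structures.
From mathcomp Require Import all_boot all_order all_algebra.
From mathcomp Require Import all_classical all_reals all_analysis.
From mathcomp Require Import complex.
From mathcomp Require Import lra.
Import Order.TTheory GRing.Theory Num.Theory.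
Import numFieldNormedType.Exports.
Local Open Scope classical_set_scope.
Local Open Scope ring_scope.
Set Implicit Arguments.
Unset Strict Implicit.
Unset Printing Implicit Defensive.

Section Helpers.
Context (R : realType) (d : measure_display) (M : measurableType d).
Implicit Types (f g : M -> R).

Lemma bmR_cst (c : R) : bmeasR (fun _ : M => c).
Proof. split; first exact: measurable_cst. by exists `|c|. Qed.

Lemma bmR_add f g : bmeasR f -> bmeasR g -> bmeasR (f \+ g).
Proof.
move=> [mf [k1 h1]] [mg [k2 h2]]; split; first exact: measurable_realfun.measurable_funD.
exists (k1 + k2) => x; apply: le_trans (ler_normD _ _) _; exact: lerD.
Qed.

Lemma bmR_mul f g : bmeasR f -> bmeasR g -> bmeasR (f \* g).
Proof.
move=> [mf [k1 h1]] [mg [k2 h2]]; split; first exact: measurable_realfun.measurable_funM.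
exists (k1 * k2) => x /=; rewrite normrM; apply: ler_pM => //.
Qed.

Lemma bmR_indic (A : set M) : measurable A -> bmeasR (\1_A : M -> R).
Proof.
move=> mA; split; first exact: measurable_realfun.measurable_indic.
exists 1 => x; rewrite /indic; case: (x \in A) => /=; by rewrite ?normr1 ?normr0.
Qed.

Lemma bmR_min f (l : R) : bmeasR f -> bmeasR (fun x => Num.min (f x) l).
Proof.
move=> [mf [k h]]; split.
  exact: (measurable_realfun.measurable_minr mf (measurable_cst l)).
exists (k + `|l|) => x; rewrite minEle; case: ifP => _.
  by apply: le_trans (h x) _; rewrite lerDl.
by rewrite lerDr (le_trans _ (h x)).
Qed.

Lemma bmR_max f (l : R) : bmeasR f -> bmeasR (fun x => Num.max (f x) l).
Proof.
move=> [mf [k h]]; split.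
  exact: (measurable_realfun.measurable_maxr mf (measurable_cst l)).
exists (k + `|l|) => x; rewrite maxEle; case: ifP => _.
  by rewrite lerDr (le_trans _ (h x)).
by apply: le_trans (h x) _; rewrite lerDl.
Qed.

Lemma bmR_inv f (e : R) : 0 < e -> (forall x, e <= `|f x|) -> bmeasR f ->
  bmeasR (fun x => (f x)^-1).
Proof.
move=> e0 he [mf _]; split.
  have -> : (fun x => (f x)^-1) = GRing.inv \o f by [].
  apply: (@measurable_comp _ _ _ _ _ _ [set r : R | r != 0%R]) => //.
  - apply: measurable_realfun.open_measurable; exact: open_neq.
  - move=> _ [x _ <-] /=. by rewrite -normr_gt0 (lt_le_trans e0).
  - apply: measurable_realfun.open_continuous_measurable_fun; first exact: open_neq.
    by apply/in_setP => x /= x0; exact: inv_continuous.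
exists e^-1 => x; rewrite normrV ?unitfE -?normr_gt0 ?(lt_le_trans e0) //.
by rewrite lef_pV2 ?posrE ?(lt_le_trans e0).
Qed.

Lemma bmC_cplx f : bmeasR f -> bmeasC (cplx f).
Proof. by move=> h; split => //; exact: bmR_cst. Qed.

End Helpers.



Section Char.
Context (R : realType) (d : measure_display) (M : measurableType d).
Implicit Types (f g : M -> R).
Variable tau : (M -> R[i]) -> R[i].
Hypothesis tD : forall f g : M -> R[i], bmeasC f -> bmeasC g -> tau (f \+ g) = tau f + tau g.
Hypothesis tZ : forall (c : R[i]) (f : M -> R[i]), bmeasC f -> tau (fun x => c * f x) = c * tau f.
Hypothesis tM : forall f g : M -> R[i], bmeasC f -> bmeasC g -> tau (f \* g) = tau f * tau g.
Hypothesis tN : exists f : M -> R[i], bmeasC f /\ tau f != 0.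

Local Notation T g := (tau (cplx g)).

Lemma T_add f g : bmeasR f -> bmeasR g -> T (f \+ g) = T f + T g.
Proof.
move=> hf hg; rewrite -tD; try exact: bmC_cplx; congr tau; apply/funext => x.
by rewrite /cplx /= rmorphD.
Qed.

Lemma T_mul f g : bmeasR f -> bmeasR g -> T (f \* g) = T f * T g.
Proof.
move=> hf hg; rewrite -tM; try exact: bmC_cplx; congr tau; apply/funext => x.
by rewrite /cplx /= rmorphM.
Qed.

Lemma T1 : T (fun _ => 1) = 1.
Proof.
case: tN => f [bf tf0].
have : tau f = tau f * T (fun _ => 1).
  rewrite -tM //; last exact/bmC_cplx/bmR_cst.
  congr tau; apply/funext => x; by rewrite /cplx /= rmorph1 mulr1.
move/eqP; rewrite -{1}(mulr1 (tau f)) eq_sym -subr_eq0 -mulrBr mulf_eq0 (negbTE tf0) /=.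
by rewrite subr_eq0 => /eqP.
Qed.

Lemma T_cst c : T (fun _ => c) = c%:C%C.
Proof.
have -> : cplx (fun _ : M => c) = (fun x => c%:C%C * cplx (fun _ => 1) x).
  by apply/funext => x; rewrite /cplx rmorph1 mulr1.
by rewrite tZ ?T1 ?mulr1 //; exact/bmC_cplx/bmR_cst.
Qed.

Lemma T_neq0 g (e : R) : 0 < e -> (forall x, e <= `|g x|) -> bmeasR g -> T g != 0.
Proof.
move=> e0 he bg.
have bi := bmR_inv e0 he bg.
have : T (g \* (fun x => (g x)^-1)) = 1.
  rewrite -T1; congr tau; apply/funext => x; rewrite /cplx /= mulfV //.
  by rewrite -normr_gt0 (lt_le_trans e0).
rewrite T_mul // => h; apply/eqP => h0; move: h; rewrite h0 mul0r => /eqP.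
by rewrite eq_sym oner_eq0.
Qed.

Lemma cplx_indic (A : set M) : cplx (\1_A : M -> R) = \1_A.
Proof. by apply/funext => x; rewrite /cplx /indic; case: (x \in A); rewrite /= ?rmorph1 ?rmorph0. Qed.

Lemma Ephi_meas (phi : M -> R) : bmeasR phi -> forall l, measurable (Ephi phi l).
Proof.
move=> [mphi _] l.
have := measurable_realfun.measurable_fun_ler mphi (measurable_cst l).
move=> /(_ measurableT [set true]) /=; rewrite setTI.
move=> h; have := h I; rewrite /Ephi.
exact.
Qed.

Lemma inf_char (S : set R) (r : R) :
  (forall l, l < r -> ~ S l) -> (forall l, r < l -> S l) -> inf S = r.
Proof.
move=> hlt hgt.
have lbr : lbound S r.
  move=> l Sl; rewrite leNgt; apply/negP => lr; exact: hlt l lr Sl.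
have neS : S !=set0 by exists (r + 1); apply: hgt; rewrite ltrDl.
apply/eqP; rewrite eq_le (lb_le_inf neS lbr) andbT.
rewrite leNgt; apply/negP => ri.
have hS := ge_inf (ex_intro _ r lbr).
have : S ((r + inf S) / 2) by apply: hgt; rewrite ltr_pdivlMr // mulrDr mulr1 ltrD2l.
move/hS; apply/negP; rewrite -ltNge ltr_pdivrMr // mulrDr mulr1 ltrD2r //.
Qed.

Lemma key (phi : M -> R) : bmeasR phi ->
  tau (cplx phi) = (inf [set l | tau \1_(Ephi phi l) = 1])%:C%C.
Proof.
move=> bphi.
set lam := tau (cplx phi).
have lamE : lam = ((complex.Re lam) +i* (complex.Im lam))%C by case: lam.
set a := complex.Re lam.
have Im0 : complex.Im lam = 0.
  case: (eqVneq (complex.Im lam) 0) => // b0; exfalso.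
  pose g := (phi \+ (fun _ => - a)) \* (phi \+ (fun _ => - a)) \+ (fun _ => complex.Im lam * complex.Im lam).
  have bg : bmeasR g by apply: bmR_add; [apply: bmR_mul; apply: bmR_add => //; exact: bmR_cst|exact: bmR_cst].
  have : T g != 0.
    apply: (@T_neq0 g (complex.Im lam * complex.Im lam)) => //.
      by rewrite -expr2 lt_neqAle sqr_ge0 andbT eq_sym expf_eq0 /= (negbTE b0).
    move=> x; rewrite /g /= ger0_norm; first by rewrite lerDr -expr2 sqr_ge0.
    by rewrite addr_ge0 // -expr2 sqr_ge0.
  rewrite /g T_add; last exact: bmR_cst.
  rewrite T_mul; try (apply: bmR_add => //; exact: bmR_cst).
  rewrite T_add //; last exact: bmR_cst.
  rewrite !T_cst -/lam lamE /= -/a.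
  move=> /eqP; apply; rewrite /real_complex_def; simpc.
  by rewrite addNr.
  by apply: bmR_mul; apply: bmR_add => //; exact: bmR_cst.
have lamE' : lam = a%:C%C by rewrite lamE Im0.
have bpa : bmeasR (phi \+ (fun _ => - a)) by apply: bmR_add => //; exact: bmR_cst.
have Tpa : T (phi \+ (fun _ => - a)) = 0.
  by rewrite T_add ?T_cst -/lam ?lamE' ?rmorphN ?subrr //; exact: bmR_cst.
rewrite lamE'; congr (_%:C)%C; symmetry; apply: inf_char => l hl.
- move=> /= hS.
  set E := Ephi phi l.
  have mE : measurable E by exact: Ephi_meas.
  pose g := fun x => Num.min (phi x) l + - a.
  have bg : bmeasR g by apply: bmR_add; [exact: bmR_min|exact: bmR_cst].
  have : T g != 0.
    apply: (@T_neq0 g (a - l)) => //; first by rewrite subr_gt0.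
    move=> x; rewrite /g ler0_norm; last first.
      by rewrite subr_le0 (le_trans _ (ltW hl)) // ge_min lexx orbT.
    by rewrite opprD opprK addrC lerD2r lerN2 ge_min lexx orbT.
  have eqf : (\1_E : M -> R) \* g = (\1_E : M -> R) \* (phi \+ (fun _ => - a)).
    apply/funext => x /=; rewrite /indic; case: (boolP (x \in E)) => xE.
      by rewrite /g min_l //; move: xE; rewrite inE.
    by rewrite !mul0r.
  have := congr1 (fun h => T h) eqf => /=.
  rewrite !T_mul //; try exact: bmR_indic.
  rewrite Tpa cplx_indic hS mulr0 mul1r => ->.
  by rewrite eqxx.
- set E := Ephi phi l.
  have mE : measurable E by exact: Ephi_meas.
  pose k := (fun _ : M => (1 : R)) \+ (fun _ => (-1 : R)) \* (\1_E : M -> R).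
  have bk : bmeasR k.
    apply: bmR_add; first exact: bmR_cst.
    by apply: bmR_mul; [exact: bmR_cst|exact: bmR_indic].
  pose g := fun x => Num.max (phi x) l + - a.
  have bg : bmeasR g by apply: bmR_add; [exact: bmR_max|exact: bmR_cst].
  have : T g != 0.
    apply: (@T_neq0 g (l - a)) => //; first by rewrite subr_gt0.
    move=> x; rewrite /g ger0_norm; last first.
      by rewrite subr_ge0 (le_trans (ltW hl)) // le_max lexx orbT.
    by rewrite lerD2r le_max lexx orbT.
  have eqf : k \* g = k \* (phi \+ (fun _ => - a)).
    apply/funext => x /=; rewrite /k /indic /=; case: (boolP (x \in E)) => xE.
      by rewrite mulr1 addrN !mul0r.
    rewrite /g max_l //; move: xE; rewrite notin_setE /E /Ephi /=.
    by move=> /negP; rewrite -ltNge => /ltW.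
  have := congr1 (fun h => T h) eqf => /=.
  rewrite !T_mul // Tpa mulr0 => /eqP; rewrite mulf_eq0 => /orP[]; last by move=> /eqP ->; rewrite eqxx.
  rewrite /k T_add; last 2 first.
  - exact: bmR_cst.
  - by apply: bmR_mul; [exact: bmR_cst|exact: bmR_indic].
  rewrite T_mul; [|exact: bmR_cst|exact: bmR_indic].
  rewrite !T_cst cplx_indic rmorph1 rmorphN rmorph1 mulN1r subr_eq0 => /eqP <- _.
  by [].
Qed.

End Char.



Ltac cl1 X x := have := boolp.EM (X x).

Section Quot.
Context (R : realType) (d : measure_display) (M : measurableType d).
Variable I : set (set M).
Hypothesis hI : sigma_ideal I.

Definition sd (A B : set M) := (A `\` B) `|` (B `\` A).

Lemma Imeas A : I A -> measurable A.
Proof. by case: hI => h _ _ _ /h. Qed.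

Lemma I0 : I set0. Proof. by case: hI. Qed.

Lemma I_sub A B : I B -> measurable A -> A `<=` B -> I A.
Proof. by case: hI => _ _ h _; apply: h. Qed.

Lemma I_U A B : I A -> I B -> I (A `|` B).
Proof.
move=> IA IB; case: hI => _ _ hs hu.
pose F := fun n : nat => if n is 0%N then A else B.
have := hu F (fun n => if n is 0%N then IA else IB) => IU.
apply: (I_sub IU); first by apply: measurableU; exact: Imeas.
by move=> x [xA|xB]; [exists 0%N|exists 1%N].
Qed.

Lemma I_sub2 X Y Z : measurable X -> X `<=` Y `|` Z -> I Y -> I Z -> I X.
Proof. move=> mX sXYZ IY IZ; apply: (I_sub (I_U IY IZ)) mX sXYZ. Qed.

Lemma I_sub3 X Y Z W : measurable X -> X `<=` Y `|` Z `|` W -> I Y -> I Z -> I W -> I X.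
Proof. move=> mX sX IY IZ IW; apply: (I_sub (I_U (I_U IY IZ) IW)) mX sX. Qed.

Lemma I_sub0 X : measurable X -> X `<=` set0 -> I X.
Proof. move=> mX sX; exact: (I_sub I0). Qed.

Lemma sd_meas A B : measurable A -> measurable B -> measurable (sd A B).
Proof. by move=> mA mB; apply: measurableU; apply: measurableD. Qed.

Lemma cls_eq A B : measurable A -> measurable B -> I (sd A B) -> cls I A = cls I B.
Proof.
move=> mA mB hAB; apply/seteqP; split => C [mC hC]; split => //.
- apply: (I_sub2 (sd_meas mB mC) _ hAB hC).
  move=> x; rewrite /sd /setD /setU /=; cl1 A x; cl1 B x; cl1 C x; tauto.
- apply: (I_sub2 (sd_meas mA mC) _ hAB hC).
  move=> x; rewrite /sd /setD /setU /=; cl1 A x; cl1 B x; cl1 C x; tauto.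
Qed.

Lemma cls_self A : measurable A -> cls I A A.
Proof.
move=> mA; split => //; apply: I_sub0; first exact: sd_meas.
by move=> x; rewrite /sd /setD /setU /=; tauto.
Qed.

Lemma cls_eqI A B : measurable A -> measurable B -> cls I A = cls I B -> I (sd A B).
Proof.
move=> mA mB e; have : cls I A B by rewrite e; exact: cls_self.
by case.
Qed.

Lemma Qle_cls A B : measurable A -> measurable B ->
  Qle I (cls I A) (cls I B) <-> I (A `\` B).
Proof.
move=> mA mB; split; last by move=> h; exists A, B.
case=> [A' [B' [mA' mB' e1 e2 h]]].
have h1 := cls_eqI mA mA' e1; have h2 := cls_eqI mB mB' e2.
apply: (I_sub3 (measurableD mA mB) _ h1 h h2).
move=> x; rewrite /sd /setD /setU /=; cl1 A x; cl1 B x; cl1 A' x; cl1 B' x; tauto.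
Qed.

Lemma Qle_sub A B : measurable A -> measurable B -> A `<=` B -> Qle I (cls I A) (cls I B).
Proof.
move=> mA mB sAB; apply/Qle_cls => //; apply: I_sub0; first exact: measurableD.
by move=> x [/sAB].
Qed.

Ltac qsub := apply: Qle_sub; (try by []); (try by apply: measurableI); (try by move=> ? []); (try by move=> ? [[]]).

Lemma Qle_trans A B C : measurable A -> measurable B -> measurable C ->
  Qle I (cls I A) (cls I B) -> Qle I (cls I B) (cls I C) -> Qle I (cls I A) (cls I C).
Proof.
move=> mA mB mC /(Qle_cls mA mB) h1 /(Qle_cls mB mC) h2; apply/Qle_cls => //.
apply: (I_sub2 (measurableD mA mC) _ h1 h2).
move=> x; rewrite /setD /setU /=; cl1 A x; cl1 B x; cl1 C x; tauto.
Qed.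

Lemma meet_cls A C : measurable A -> measurable C ->
  is_meet (Qcar I) (Qle I) (cls I A) (cls I C) (cls I (A `&` C)).
Proof.
move=> mA mC; have mAC := measurableI _ _ mA mC.
split.
- by exists (A `&` C).
- by apply: Qle_sub => // x [].
- by apply: Qle_sub => // x [].
- move=> _ [X [mX ->]] /(Qle_cls mX mA) h1 /(Qle_cls mX mC) h2; apply/Qle_cls => //.
  apply: (I_sub2 (measurableD mX mAC) _ h1 h2).
  move=> x; rewrite /setD /setU /setI /=; cl1 A x; cl1 X x; cl1 C x; tauto.
Qed.

Variable Q : set (set (set M)).
Hypothesis hQ : QA I Q.

Definition P (A : set M) := measurable A /\ Q (cls I A).

Lemma QinL c : Q c -> exists A, measurable A /\ c = cls I A.
Proof. by case: hQ => [[h _ _ _ _] _] /h. Qed.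

Lemma P_up A C : P A -> measurable C -> I (A `\` C) -> P C.
Proof.
case: hQ => [[_ _ hup _ _] _] [mA QA] mC h; split => //.
apply: (hup _ _ QA); first by exists C.
by apply/Qle_cls.
Qed.

Lemma P_sub A C : P A -> measurable C -> A `<=` C -> P C.
Proof.
move=> PA mC sAC; apply: (P_up PA mC); apply: I_sub0.
  by apply: measurableD => //; case: PA.
by move=> x [/sAC].
Qed.

Lemma P_meet A C : P A -> P C -> P (A `&` C).
Proof.
case: hQ => [[_ _ _ _ hm] _] [mA QA] [mC QC]; split; first exact: measurableI.
by apply: (hm _ _ _ QA QC); exact: meet_cls.
Qed.

Lemma P_not0 A : P A -> ~ I A.
Proof.
case: hQ => [[_ _ _ hb _] _] [mA QA] IA; apply: hb.
rewrite /Qbot -(cls_eq mA measurable0) //.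
apply: (I_sub IA); first exact: sd_meas.
by move=> x; rewrite /sd /setD /setU /=; tauto.
Qed.

Lemma P_T : P setT.
Proof.
case: hQ => [[_ [c Qc] _ _ _] _]; have [Y [mY e]] := QinL Qc.
by apply: (@P_sub Y) => //; rewrite /P -e.
Qed.

Lemma P_ultra A : measurable A -> ~ P A -> P (~` A).
Proof.
move=> mA nPA; apply: contrapT => nPC.
pose Q' := [set c | Qcar I c /\ exists Y, P Y /\ Qle I (cls I (Y `&` A)) c].
have sQQ' : Q `<=` Q'.
  move=> c Qc; have [Y [mY e]] := QinL Qc; split; first by exists Y.
  exists Y; split; first by rewrite /P -e.
  by rewrite e; qsub.
have dQ' : dual_ideal (Qcar I) (Qle I) (Qbot I) Q'.
  split.
  - by move=> c [].
  - exists (cls I A); split; first by exists A.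
    exists setT; split; first exact: P_T.
    by qsub.
  - move=> a b [[X [mX ea]] [Y [PY hY]]] [Z [mZ eb]] hab; split; first by exists Z.
    exists Y; split => //; rewrite eb; rewrite ea in hY; rewrite ea eb in hab.
    have mYA : measurable (Y `&` A) by apply: measurableI => //; case: PY.
    exact: (Qle_trans mYA mX mZ).
  - move=> [_ [Y [PY]]]; have mY : measurable Y by case: PY.
    have mYA : measurable (Y `&` A) by exact: measurableI.
    rewrite /Qbot => /(Qle_cls mYA measurable0) h.
    apply: nPC; apply: (P_up PY (measurableC mA)).
    apply: (I_sub h); first by apply: measurableD => //; exact: measurableC.
    by move=> x; rewrite /setD /setC /setI /=; cl1 A x; tauto.
  - move=> a b c [[X1 [mX1 ea]] [Y1 [PY1 h1]]] [[X2 [mX2 eb]] [Y2 [PY2 h2]]] hm.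
    case: (hm) => [hc _ _ hg]; split => //.
    exists (Y1 `&` Y2); split; first exact: P_meet.
    have mY1 : measurable Y1 by case: PY1.
    have mY2 : measurable Y2 by case: PY2.
    have mYA : measurable (Y1 `&` Y2 `&` A) by do 2 apply: measurableI => //.
    apply: hg; first by exists (Y1 `&` Y2 `&` A).
    + rewrite ea; rewrite ea in h1.
      apply: (Qle_trans mYA (measurableI _ _ mY1 mA) mX1) => //.
      by qsub.
    + rewrite eb; rewrite eb in h2.
      apply: (Qle_trans mYA (measurableI _ _ mY2 mA) mX2) => //.
      by qsub.
case: hQ => _ hmax; have := hmax _ dQ' sQQ' => eQ.
apply: nPA; split => //; rewrite -eQ; split; first by exists A.
exists setT; split; first exact: P_T.
by qsub.
Qed.

End Quot.



Section Cont.
Context (R : realType) (d : measure_display) (M : measurableType d).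
Variable I : set (set M).
Hypothesis hI : sigma_ideal I.
Variable phi : M -> R.
Hypothesis bphi : bmeasR phi.
Variable k : R.
Hypothesis hk : forall x, `|phi x| <= k.

Definition SQ (Q : set (set (set M))) := [set l : R | Q (Eclass I phi l)].

Lemma SQ_P Q l : SQ Q l <-> P I Q (Ephi phi l).
Proof.
split; last by case.
by move=> h; split => //; exact: Ephi_meas.
Qed.

Lemma SQ_mono Q : QA I Q -> forall l l', SQ Q l -> l <= l' -> SQ Q l'.
Proof.
move=> hQ l l' /SQ_P h ll'; apply/SQ_P; apply: (P_sub hI hQ h).
  exact: Ephi_meas.
by move=> x; rewrite /Ephi /= => /le_trans; apply.
Qed.

Lemma SQ_k Q : QA I Q -> SQ Q k.
Proof.
move=> hQ; apply/SQ_P; apply: (P_sub hI hQ (P_T hI hQ)); first exact: Ephi_meas.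
by move=> x _; rewrite /Ephi /= (le_trans (ler_norm _) (hk x)).
Qed.

Lemma SQ_lb Q : QA I Q -> lbound (SQ Q) (- k).
Proof.
move=> hQ l /SQ_P Pl; rewrite leNgt; apply/negP => lk.
apply: (P_not0 hI hQ Pl); apply: (I_sub0 hI); first exact: Ephi_meas.
move=> x; rewrite /Ephi /= => h; have := hk x; rewrite ler_norml => /andP[h1 _].
by move: (le_lt_trans h1 (le_lt_trans h lk)); rewrite ltxx.
Qed.

Lemma SQ_ne Q : QA I Q -> SQ Q !=set0.
Proof. by move=> hQ; exists k; exact: SQ_k. Qed.

Lemma SQ_hlb Q : QA I Q -> has_lbound (SQ Q).
Proof. by move=> hQ; exists (- k); exact: SQ_lb. Qed.

Lemma stone_cont : stone_continuous (Qcar I) (Qle I) (Qbot I) (fE (Eclass I phi)).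
Proof.
move=> V oV; split; first by move=> B [].
move=> Q [hQ VQ].
set lam := fE (Eclass I phi) Q.
have : nbhs lam V by move: oV; rewrite openE => /(_ _ VQ).
move=> /nbhs_ballP [e /= e0 hball].
have e20 : 0 < e / 2 by rewrite divr_gt0.
set l1 := lam + e / 2.
set l2 := lam - e / 2.
have S1 : SQ Q l1.
  have hlt : inf (SQ Q) < l1 by rewrite /l1 /lam /fE ltrDl.
  have [y Sy ylt] := inf_lt (SQ_ne hQ) hlt.
  exact: (SQ_mono hQ Sy (ltW ylt)).
have nS2 : ~ SQ Q l2.
  move=> /(ge_inf (SQ_hlb hQ)); change (inf (SQ Q)) with lam; rewrite /l2.
  move=> h; lra.
have mE2 : measurable (Ephi phi l2) by exact: Ephi_meas.
have PC : P I Q (~` Ephi phi l2).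
  apply: (P_ultra hI hQ mE2) => h; apply: nS2; exact/SQ_P.
exists 2%N, (fun i => if i == 0%N then Eclass I phi l1 else cls I (~` Ephi phi l2)).
split.
  by move=> [|[|i]] //= _; case: PC.
move=> Q' hQ' hall; split => //.
have S1' : SQ Q' l1 by exact: (hall 0%N).
have C' : P I Q' (~` Ephi phi l2).
  by split; [exact: measurableC|exact: (hall 1%N)].
have le1 : fE (Eclass I phi) Q' <= l1 by exact: (ge_inf (SQ_hlb hQ') S1').
have le2 : l2 <= fE (Eclass I phi) Q'.
  apply: lb_le_inf; first exact: SQ_ne.
  move=> l /[dup] Sl /SQ_P Pl; rewrite leNgt; apply/negP => ll2.
  have P2 : P I Q' (Ephi phi l2) by apply/SQ_P; exact: (SQ_mono hQ' Sl (ltW ll2)).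
  have := P_meet hI hQ' P2 C'; move/(P_not0 hI hQ'); apply.
  apply: (I_sub0 hI); first by apply: measurableI => //; exact: measurableC.
  by move=> x [].
apply: hball; rewrite -ball_normE /ball_ /=.
rewrite ltr_norml; apply/andP; split; rewrite /l1 /l2 in le1 le2; lra.
Qed.

End Cont.

Unset Implicit Arguments.

Theorem theorem2p14 (R : realType) (d : measure_display) (M : measurableType d)
  (I : set (set M)) (hI : sigma_ideal I) :
  (forall phi : M -> R, bmeasR phi ->
     stone_continuous (Qcar I) (Qle I) (Qbot I) (fE (Eclass I phi)) /\
     (forall tau, quotient_character I tau ->
        tau (cplx phi) = ((fE (Eclass I phi) (kappa I tau))%:C)%C)) /\
  (forall phi : M -> R, bmeasR phi ->
     forall B, QIM I B -> fE (Eclass I phi) (ident I B) = fE (Ephi phi) B) /\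
  (forall phi : M -> R, bmeasR phi ->
     forall tau, quotient_character (@set0 (set M)) tau ->
        tau (cplx phi) = ((fE (Ephi phi) (kappa0 tau))%:C)%C).
Proof.
split; [|split].
- move=> phi bphi; have [_ [k hk]] := bphi; split.
    exact: (stone_cont hI bphi hk).
  move=> tau [tD tZ tM tN tF]; rewrite (key tD tZ tM tN bphi).
  congr (_%:C)%C; rewrite /fE; congr (inf _); apply/seteqP; split => l /= h.
    by exists (Ephi phi l); split => //; exact: Ephi_meas.
  case: h => A [mA e hA].
  have mE := Ephi_meas bphi l.
  have sdI := cls_eqI hI mE mA e.
  pose g := (\1_(Ephi phi l) : M -> R) \+ (fun _ => -1) \* (\1_A : M -> R).
  have bg : bmeasR g.
    apply: bmR_add; first exact: bmR_indic.
    by apply: bmR_mul; [exact: bmR_cst|exact: bmR_indic].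
  have FIg : FI I (cplx g).
    split; first exact: bmC_cplx.
    exists (sd (Ephi phi l) A); split => // x nx.
    have exa : (x \in Ephi phi l) = (x \in A).
      apply/idP/idP => /set_mem hx; apply/mem_set; apply: contrapT => hn; apply: nx.
        by left.
      by right.
    by rewrite /cplx /g /indic /= exa mulN1r subrr.
  rewrite -cplx_indic (_ : (\1_(Ephi phi l) : M -> R) = \1_A \+ g); last first.
    by apply/funext => x; rewrite /g /= mulN1r addrC subrK.
  have -> : cplx (\1_A \+ g) = cplx (\1_A : M -> R) \+ cplx g.
    by apply/funext => x; rewrite /cplx /= rmorphD.
  rewrite tD; last 2 first.
  + exact/bmC_cplx/bmR_indic.
  + exact: bmC_cplx.
  by rewrite cplx_indic hA (tF _ FIg) addr0.
- move=> phi bphi B [[[hsub hne hup hnb hmeet] hmax] hIB].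
  rewrite /fE; congr (inf _); apply/seteqP; split => l /= h; last first.
    by exists (Ephi phi l).
  case: h => A [BA e].
  have mA := hsub _ BA.
  have mE := Ephi_meas bphi l.
  have sdI := cls_eqI hI mA mE (esym e).
  have BC := hIB _ sdI.
  have mC : measurable (~` sd A (Ephi phi l)) by apply: measurableC; exact: sd_meas.
  have BAC : B (A `&` ~` sd A (Ephi phi l)).
    apply: (hmeet _ _ _ BA BC); split.
    - exact: measurableI.
    - by move=> x [].
    - by move=> x [].
    - by move=> e0 _ h1 h2 x ex; split; [exact: h1|exact: h2].
  apply: (hup _ _ BAC mE).
  move=> x [xA]; rewrite /sd /setC /setU /setD /=; cl1 (Ephi phi l) x; tauto.
- move=> phi bphi tau [tD tZ tM tN _]; rewrite (key tD tZ tM tN bphi).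
  congr (_%:C)%C; rewrite /fE; congr (inf _); apply/seteqP; split => l /= h.
    by split => //; exact: Ephi_meas.
  by case: h.
Qed.
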